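(* Let $\alpha\in\mathbb{C}$ with $\Re(\alpha)>-1/2$ (so that also $\Re(\alpha+1)>-1/2$). Then the canonical forms of the dual sequences satisfy $$x\,u_0(\alpha)=\frac{\alpha^2}{2\alpha+1}\,u_0(\alpha+1).$$
   Context: Let $\mathcal{A}$ be the differential operator $\mathcal{A}f(x)=-x^2f''(x)-xf'(x)+x^2f(x)$ with iterates $\mathcal{A}^n$. For $\Re(\alpha)>-1/2$, $p_n(x;\alpha)=(-1)^n e^{x}x^{-\alpha}\mathcal{A}^n(e^{-x}x^{\alpha})$ is a polynomial of degree $n$ with leading coefficient $(-2)^n(\alpha+1/2)_n$, and $P_n(x;\alpha)=p_n(x;\alpha)/\big((-2)^n(\alpha+1/2)_n\big)$. $u_0(\alpha)$ is the linear functional on complex polynomials determined by $\langle u_0(\alpha),P_k(\cdot;\alpha)\rangle=\delta_{0,k}$, $k\ge0$; for a polynomial $g$, $gu$ denotes the form $f\mapsto\langle u,gf\rangle$. *)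

(* Defs.v *)
From HB Require Import structures.
From mathcomp Require Import all_boot all_order all_algebra.
Set Implicit Arguments. Unset Strict Implicit. Unset Printing Implicit Defensive.
Import Order.TTheory GRing.Theory Num.Theory.
Local Open Scope ring_scope.

(* Complex numbers are modelled by an arbitrary numClosedFieldType R
   (C is one such field); 'Re is its real part. *)

(* Conjugated operator: for g(x) = e^{-x} x^a and a polynomial q,
     A (g q) = g * Aconj a q   where
     Aconj a q = -x^2 q'' + (2x^2 - (2a+1)x) q' + ((2a+1)x - a^2) q,
   obtained from A f = -x^2 f'' - x f' + x^2 f with
   g' = g(-1 + a/x),  g'' = g((-1 + a/x)^2 - a/x^2). *)
Definition Aconj (R : numClosedFieldType) (a : R) (q : {poly R}) : {poly R} :=
  - ('X^2 * q^`(2))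
  + (2%:R *: 'X^2 - (2%:R * a + 1) *: 'X) * q^`()
  + ((2%:R * a + 1) *: 'X - (a ^+ 2)%:P) * q.

(* p_n(x;a) = (-1)^n e^x x^{-a} A^n (e^{-x} x^a), i.e.
   A^n (g) = g * Aconj^n 1, so p_n = (-1)^n Aconj^n 1. *)
Definition p_poly (R : numClosedFieldType) (a : R) (n : nat) : {poly R} :=
  (-1) ^+ n *: iter n (Aconj a) 1.

Definition poch (R : numClosedFieldType) (a : R) (n : nat) : R :=
  \prod_(i < n) (a + i%:R).

(* Monic normalisation P_n = p_n / ((-2)^n (a+1/2)_n). *)
Definition P_poly (R : numClosedFieldType) (a : R) (n : nat) : {poly R} :=
  ((- 2%:R) ^+ n * poch (a + 2%:R^-1) n)^-1 *: p_poly a n.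

(* u is the canonical form u_0(a) of the dual sequence of (P_n(.;a)):
   a linear functional on polynomials with <u, P_k> = delta_{0,k}. *)
Definition is_u0 (R : numClosedFieldType) (a : R) (u : {poly R} -> R) : Prop :=
  (forall (c : R) (p q : {poly R}), u (c *: p + q) = c * u p + u q) /\
  (forall k : nat, u (P_poly a k) = (k == 0%N)%:R).

(* Main.v *)
Require Import Defs.
From HB Require Import structures.
From mathcomp Require Import all_boot all_order all_algebra.
From Stdlib Require Import Ring.
Import Order.TTheory GRing.Theory Num.Theory.
Local Open Scope ring_scope.

Lemma rthR (R : comRingType) : ring_theory (0:R) 1 +%R *%R (fun x y => x - y) -%R eq.
Proof.
split=> //; [exact: add0r|exact: addrC|exact: addrA|exact: mul1r|exact: mulrC|exact: mulrA|exact: mulrDl|exact: subrr].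
Qed.


Section Gen.
Variables (T : Type) (z o : T) (ad mu : T -> T -> T) (op : T -> T).
Hypothesis rt : ring_theory z o ad mu (fun x y => ad x (op y)) op eq.
Add Ring GR : rt.
Declare Scope g_scope.
Local Notation "x + y" := (ad x y) : g_scope.
Local Notation "x * y" := (mu x y) : g_scope.
Local Notation "- x" := (op x) : g_scope.
Local Notation "x - y" := (ad x (op y)) : g_scope.
Local Notation "1" := o : g_scope.
Local Notation "2" := (ad o o) : g_scope.
Local Open Scope g_scope.

Lemma G1 b x y : - z + (2 * z - (2 * b + 1) * y) + ((2 * b + 1) * x - (b*b) * y) =
  (2 * z + 2 * b + 1) * x - (1 * z + (2 * b + 1) * 1 + b*b) * y.
Proof. ring. Qed.
Lemma G2 b x y n :
  - (y * (n + 1 + 1) * (n + 1)) +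
  (2 * (x * (n + 1)) - (2 * b + 1) * (y * (n + 1 + 1))) +
  ((2 * b + 1) * x - (b * b) * y) =
  (2 * (n + 1) + 2 * b + 1) * x -
  ((n + 1 + 1) * (n + 1) + (2 * b + 1) * (n + 1 + 1) + (b * b)) * y.
Proof. ring. Qed.
Lemma GL X2 M1 M2 C p2 q2 p1 q1 p q : - (X2 * (C * p2 + q2)) + M1 * (C * p1 + q1) + M2 * (C * p + q) = C * (- (X2 * p2) + M1 * p1 + M2 * p) + (- (X2 * q2) + M1 * q1 + M2 * q).
Proof. ring. Qed.
Lemma G4 b n : 2 * n + 2 * b + 1 = 2 * b + 1 + 2 * n.
Proof. ring. Qed.
Lemma G5 a x : (2 * z + 2 * a + 1) * z - (1 * z + (2 * a + 1) * 1 + a*a) * x = - ((a + 1) * (a+1) * x).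
Proof. ring. Qed.
Lemma G6 a x y n :
  (2 * (n + 1) + 2 * a + 1) * x -
  ((n + 1 + 1) * (n + 1) + (2 * a + 1) * (n + 1 + 1) + a * a) * y =
  (2 * n + 2 * (a + 1) + 1) * x -
  ((n + 1) * n + (2 * (a + 1) + 1) * (n + 1) + (a + 1) * (a + 1)) * y.
Proof. ring. Qed.
Lemma G7 a n : 2 * n + 2 * (a + 1) + 1 = 2 * (n + 1) + 2 * a + 1.
Proof. ring. Qed.
End Gen.

Ltac gr L := apply: (@L _ _ _ _ _ _ (rthR _)).

Section W.
Variable R : numClosedFieldType.
Implicit Types (a b c : R) (p q f g : {poly R}).
Lemma mnE (x : R) n : x *+ n = x * n%:R. Proof. by rewrite mulr_natr. Qed.
Lemma nS n : (n.+1)%:R = n%:R + 1 :> R. Proof. by rewrite mulrSr. Qed.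

Lemma coefA b q i : (Aconj b q)`_i.+1 =
  (2%:R * i%:R + 2%:R * b + 1) * q`_i - ((i.+1)%:R * i%:R + (2%:R * b + 1) * i.+1%:R + b ^+ 2) * q`_i.+1.
Proof.
rewrite /Aconj !mulrBl -!scalerAl !(coefD, coefN, coefB, coefZ, coefCM, coefXM, coefXnM) /=.
case: i => [|i] /=.
  rewrite !coef_deriv.
  gr G1.
have e2 : (i.+2 - 2 = i)%N by rewrite -addn2 addnK.
rewrite e2 !coef_deriv.
rewrite (mnE (q`_i.+2 *+ _)) (mnE (q`_i.+2)) (mnE (q`_i.+1)) (nS i.+1) (nS i).
move: (q`_i.+1) (q`_i.+2) (i%:R : R) => x y n.
gr G2.
Qed.

Lemma coefA0 b q : (Aconj b q)`_0 = - (b ^+ 2 * q`_0).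
Proof.
rewrite /Aconj !mulrBl -!scalerAl !(coefD, coefN, coefB, coefZ, coefCM, coefXM, coefXnM) /=.
by rewrite oppr0 !mulr0 subrr !add0r.
Qed.

Lemma AconjL b c p q : Aconj b (c *: p + q) = c *: Aconj b p + Aconj b q.
Proof.
rewrite /Aconj derivnD derivnZ derivD derivZ.
move: (2%:R *: 'X^2 - (2%:R * b + 1) *: 'X) => M1.
move: ((2%:R * b + 1) *: 'X - (b ^+ 2)%:P) => M2.
move: ('X^2 : {poly R}) => X2.
move: (p^`(2)) (q^`(2)) (p^`()) (q^`()) => p2 q2 p1 q1.
rewrite -!mul_polyC.
move: (c%:P) => C.
gr GL.
Qed.

Definition T b n := iter n (Aconj b) 1.
Definition dT b n := \prod_(j < n) (2%:R * j%:R + 2%:R * b + 1).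

Lemma sizeA b q n : (size q <= n.+1)%N ->
  (size (Aconj b q) <= n.+2)%N /\ (Aconj b q)`_n.+1 = (2%:R * n%:R + 2%:R * b + 1) * q`_n.
Proof.
move=> /leq_sizeP H; split.
  apply/leq_sizeP => -[|j] // hj.
  by rewrite coefA (H j hj) (H j.+1 (ltnW hj)) !mulr0 subrr.
by rewrite coefA (H n.+1) // mulr0 subr0.
Qed.

Lemma sizeT b n : (size (T b n) <= n.+1)%N /\ (T b n)`_n = dT b n.
Proof.
elim: n => [|n [IH1 IH2]].
  by rewrite /T /dT /= size_poly1 big_ord0 coefC.
have [s c] := @sizeA b _ _ IH1.
by rewrite /T iterS -/(T b n) s c IH2 /dT big_ord_recr /= mulrC.
Qed.

Definition lin (L : {poly R} -> R) := forall c p q, L (c *: p + q) = c * L p + L q.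

Lemma lin0 L : lin L -> L 0 = 0.
Proof. move=> H; have := H 1 0 0; rewrite scale1r addr0 mul1r => E.
by apply: (@addrI _ (L 0)); rewrite addr0 -E.
Qed.
Lemma linZ L c p : lin L -> L (c *: p) = c * L p.
Proof. by move=> H; rewrite -[c *: p]addr0 H lin0 // addr0. Qed.

Lemma Uniq b (nd : forall j : nat, 2%:R * j%:R + 2%:R * b + 1 != 0) L1 L2 :
  lin L1 -> lin L2 -> (forall j, L1 (T b j.+1) = 0) -> (forall j, L2 (T b j.+1) = 0) ->
  L2 1 = 1 -> forall f, L1 f = L1 1 * L2 f.
Proof.
move=> l1 l2 k1 k2 o2 f.
suff H : forall n g, (size g <= n.+1)%N -> L1 g = L1 1 * L2 g by exact: (H (size f)).
elim=> [|n IH] g hg.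
  have -> : g = g`_0 *: 1 by rewrite -mul_polyC mulr1 -size1_polyC.
  by rewrite !linZ // o2 mulr1 mulrC.
have dn : dT b n.+1 != 0 by apply/prodf_neq0 => j _; exact: nd.
set k := g`_n.+1 / dT b n.+1.
have eg : g = k *: T b n.+1 + (g - k *: T b n.+1) by rewrite addrC subrK.
rewrite eg l1 l2 k1 k2 !mulr0 !add0r; apply: IH.
have [/leq_sizeP s c] := sizeT b n.+1.
move/leq_sizeP: hg => hg.
apply/leq_sizeP => j; rewrite leq_eqVlt => /orP[/eqP <-|hj].
  by rewrite coefB coefZ c /k divfK // subrr.
by rewrite coefB coefZ hg // s // mulr0 subr0.
Qed.


Lemma two_neq0 : (2%:R : R) != 0. Proof. by rewrite pnatr_eq0. Qed.

Lemma ndRe a : - 2%:R^-1 < 'Re a -> forall j : nat, 2%:R * j%:R + 2%:R * a + 1 != 0.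
Proof.
move=> h j; apply/eqP => E.
have : 'Re (2%:R * j%:R + 2%:R * a + 1) = 0 by rewrite E raddf0.
have Rj : 'Re (j%:R : R) = j%:R by apply/Creal_ReP; exact: realn.
have R1 : 'Re (1 : R) = 1 by apply/Creal_ReP; exact: real1.
rewrite !raddfD /= !(ReMl (realn _ 2)) Rj R1.
set r := 'Re a.
have p1 : 0 < 2%:R * r + 1.
  have : 0 < r - (- 2%:R^-1) by rewrite subr_gt0.
  rewrite opprK => h'.
  have -> : 2%:R * r + 1 = 2%:R * (r + 2%:R^-1) by rewrite mulrDr mulfV ?two_neq0.
  by apply: mulr_gt0 => //; rewrite ltr0n.
have p2 : 0 < 2%:R * j%:R + 2%:R * r + 1.
  rewrite -addrA; apply: lt_le_trans p1 _; rewrite lerDr.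
  by apply: mulr_ge0; rewrite ler0n.
by move=> E'; rewrite E' ltxx in p2.
Qed.

Lemma nd1 a : (forall j : nat, 2%:R * j%:R + 2%:R * a + 1 != 0) ->
  forall j : nat, 2%:R * j%:R + 2%:R * (a + 1) + 1 != 0.
Proof.
move=> nd j; have := nd j.+1; rewrite (nS j).
move: (j%:R : R) => n.
have -> : 2%:R * n + 2%:R * (a + 1) + 1 = 2%:R * (n + 1) + 2%:R * a + 1 by gr G7.
by [].
Qed.

Lemma pochF b (nd : forall j : nat, 2%:R * j%:R + 2%:R * b + 1 != 0) k :
  poch (b + 2%:R^-1) k != 0.
Proof.
apply/prodf_neq0 => i _; apply/negP => /eqP E.
move: (nd i); rewrite (_ : 2%:R * i%:R + 2%:R * b + 1 = 2%:R * (b + 2%:R^-1 + i%:R)).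
  by rewrite E mulr0 eqxx.
rewrite !mulrDr mulfV ?two_neq0 //.
move: (i%:R : R) => n.
gr G4.
Qed.

Lemma u_facts b u (nd : forall j : nat, 2%:R * j%:R + 2%:R * b + 1 != 0) :
  is_u0 b u -> lin u /\ u 1 = 1 /\ forall k, u (T b k.+1) = 0.
Proof.
move=> [lu pu]; split; first exact: lu.
split.
  have := pu 0%N.
  by rewrite /P_poly /p_poly /poch big_ord0 !expr0 mulr1 invr1 !scale1r.
move=> k; have := pu k.+1.
rewrite /P_poly /p_poly -/(T b k.+1) !linZ //= => /eqP.
have hs : ((- 2%:R) ^+ k.+1 * poch (b + 2%:R^-1) k.+1)^-1 != 0.
  by rewrite invr_eq0 mulf_eq0 negb_or expf_eq0 oppr_eq0 (negbTE two_neq0) andbF pochF.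
have hm : (-1 : R) ^+ k.+1 != 0 by rewrite expf_eq0 oppr_eq0 oner_eq0 andbF.
by rewrite mulf_eq0 (negbTE hs) mulf_eq0 (negbTE hm) /= => /eqP.
Qed.

Lemma shift a q : Aconj a ('X * q) = 'X * Aconj (a + 1) q.
Proof.
apply/polyP => -[|i].
  by rewrite coefA0 !coefXM /= mulr0 oppr0.
rewrite coefA !coefXM /=.
case: i => [|i] /=.
  rewrite coefA0.
  gr G5.
rewrite coefA (nS i.+1) (nS i).
move: (q`_i) (q`_i.+1) (i%:R : R) => x y n.
gr G6.
Qed.

End W.
Arguments T {R}. Arguments lin {R}. Arguments dT {R}.

Theorem mainTheorem11 (R : numClosedFieldType) (a : R)
  (ha : - 2%:R^-1 < 'Re a)
  (u v : {poly R} -> R)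
  (hu : is_u0 a u) (hv : is_u0 (a + 1) v) :
  forall f : {poly R}, u ('X * f) = a ^+ 2 / (2%:R * a + 1) * v f.
Proof.
move=> f.
have nda := @ndRe _ _ ha.
have nda1 := @nd1 _ _ nda.
have [lu [u1 uT]] := @u_facts _ _ _ nda hu.
have [lv [v1 vT]] := @u_facts _ _ _ nda1 hv.
have kill : forall g, u (Aconj a g) = 0.
  move=> g.
  have l1 : lin (fun g => u (Aconj a g)) by move=> c p q /=; rewrite AconjL lu.
  have k1 : forall j, (fun g => u (Aconj a g)) (T a j.+1) = 0 by move=> j /=; exact: (uT j.+1).
  have := @Uniq R a nda (fun g => u (Aconj a g)) u l1 lu k1 uT u1 g.
  move=> /= ->.
  by have := uT 0%N; rewrite /T /= => ->; rewrite mul0r.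
have uX : u 'X = a ^+ 2 / (2%:R * a + 1).
  have h1 := uT 0%N.
  have eA : Aconj a 1 = (2%:R * a + 1) *: 'X + (- (a ^+ 2)) *: 1.
    have d1 : (1 : {poly R})^`() = 0 by rewrite -polyC1 derivC.
    rewrite /Aconj /derivn /= d1 deriv0 !mulr0 oppr0 !add0r.
    rewrite (mulr1 ((2%:R * a + 1) *: 'X - (a ^+ 2)%:P)).
    by rewrite -[(- a ^+ 2)%:A]mul_polyC mulr1 polyCN.
  rewrite /T /= eA lu linZ // u1 mulr1 in h1.
  move/eqP: h1; rewrite addr_eq0 opprK => /eqP h1.
  have n0 : 2%:R * a + 1 != 0 by have := nda 0%N; rewrite mulr0n mulr0 add0r.
  by rewrite -h1 [_ * u _]mulrC mulfK.
have l1 : lin (fun f => u ('X * f)) by move=> c p q /=; rewrite mulrDr -scalerAr lu.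
have k1 : forall j, (fun f => u ('X * f)) (T (a + 1) j.+1) = 0.
  by move=> j; change (u ('X * Aconj (a + 1) (T (a + 1) j)) = 0); rewrite -shift kill.
have := @Uniq R (a + 1) nda1 (fun f => u ('X * f)) v l1 lv k1 vT v1 f.
by rewrite /= mulr1 uX.
Qed.
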